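(* Let $\mathcal X=(\Omega,S)$ be a coherent configuration and let $s$ be a relation of $\mathcal X$ which is connected. Suppose that for every point $\alpha\in\Omega$ the coherent configuration $(\mathcal X_\alpha)_{\alpha s}$ is semiregular. Then for every $(\alpha,\beta)\in s$ with $\alpha\ne\beta$ the set $\{\alpha,\beta\}$ is a base of $\mathcal X$. In particular $b(\mathcal X)\le 2$.
   Context: A coherent configuration on a finite set $\Omega$ is a pair $\mathcal X=(\Omega,S)$ where $S$ is a partition of $\Omega\times\Omega$ such that $1_\Omega$ is a union of elements of $S$, $s^*=\{(\beta,\alpha):(\alpha,\beta)\in s\}\in S$ for $s\in S$, and for $r,s,t\in S$ the number $|\{\gamma:(\alpha,\gamma)\in r,(\gamma,\beta)\in s\}|$ is independent of $(\alpha,\beta)\in t$. Relations are unions of elements of $S$; fibers are sets $\Gamma$ with $1_\Gamma\in S$. A relation $s$ is connected if it is symmetric ($s=s^*$) and any two distinct points of $\Omega$ are joined by a path in the graph $(\Omega,s)$. For $\gamma\in\Omega$, $\gamma s=\{\delta:(\gamma,\delta)\in s\}$. A fission of $\mathcal X$ is a coherent configuration on $\Omega$ whose relations include those of $\mathcal X$; complete means every basic relation is a singleton. $\mathcal X_\alpha$ is the smallest fission of $\mathcal X$ in which $\{\alpha\}$ is a fiber; $\alpha s$ is a union of fibers of $\mathcal X_\alpha$. For a union $\Gamma$ of fibers the restriction is $\mathcal X_\Gamma=(\Gamma,\{r\cap\Gamma^2:r\in S\}\setminus\{\emptyset\})$. A coherent configuration $(\Gamma,T)$ is semiregular if $|\{\delta:(\gamma,\delta)\in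 t\}|\le 1$ for all $\gamma\in\Gamma$, $t\in T$. A set $B$ is a base of $\mathcal X$ if the smallest fission in which all $\{\beta\}$, $\beta\in B$, are fibers is complete; $b(\mathcal X)$ is the minimal size of a base. *)

(* Defs.v *)
From mathcomp Require Import all_boot.
Set Implicit Arguments. Unset Strict Implicit. Unset Printing Implicit Defensive.

Section CC.
Variable T : finType.
Notation relT := {set T * T}.

Definition diag (G : {set T}) : relT := [set p | (p.1 \in G) && (p.1 == p.2)].

Definition transp (s : relT) : relT := [set p | (p.2, p.1) \in s].

(* r is a union of elements of S (S being a partition of Omega x Omega) *)
Definition is_rel (S : {set relT}) (r : relT) : Prop :=
  forall t, t \in S -> (t \subset r) \/ [disjoint t & r].

Definition coherent (S : {set relT}) : Prop :=
  [/\ partition S [set: T * T],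
      is_rel S (diag setT),
      (forall s, s \in S -> transp s \in S) &
      (forall r s t, r \in S -> s \in S -> t \in S ->
        forall a b a' b', (a, b) \in t -> (a', b') \in t ->
          #|[set g | ((a, g) \in r) && ((g, b) \in s)]|
          = #|[set g | ((a', g) \in r) && ((g, b') \in s)]|)].

Definition fiber (S : {set relT}) (G : {set T}) : Prop := diag G \in S.

Definition fission (S S' : {set relT}) : Prop :=
  coherent S' /\ forall r, is_rel S r -> is_rel S' r.

Definition complete (S : {set relT}) : Prop :=
  forall t, t \in S -> #|t| = 1.

Definition smallest_fission_fixing (S : {set relT}) (B : {set T})
    (S' : {set relT}) : Prop :=
  [/\ fission S S',
      (forall b, b \in B -> fiber S' [set b]) &
      (forall S'', fission S S'' -> (forall b, b \in B -> fiber S'' [set b]) ->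
         fission S' S'')].

Definition is_base (S : {set relT}) (B : {set T}) : Prop :=
  exists S', smallest_fission_fixing S B S' /\ complete S'.

Definition nbr (s : relT) (g : T) : {set T} := [set d | (g, d) \in s].

Definition restr (S : {set relT}) (G : {set T}) : {set relT} :=
  [set r :&: setX G G | r in S] :\ set0.

Definition semiregular (G : {set T}) (Ts : {set relT}) : Prop :=
  forall g t, g \in G -> t \in Ts -> #|nbr t g| <= 1.

Definition connected_rel (s : relT) : Prop :=
  s = transp s /\
  forall x y, x != y -> connect (fun u v => (u, v) \in s) x y.

End CC.

(* Main.v *)
Require Import Defs.
From mathcomp Require Import all_boot.
From Stdlib Require Import ClassicalDescription.
From Stdlib Require Import ClassicalDescription.
Set Implicit Arguments. Unset Strict Implicit. Unset Printing Implicit Defensive.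

Section Gen.
Variable T : finType.
Local Notation relT := {set T * T}.

Lemma transpK (r : relT) : transp (transp r) = r.
Proof. by apply/setP => -[x y]; rewrite !inE. Qed.

Lemma is_rel_part (P : {set relT}) r : partition P setT -> r \in P -> is_rel P r.
Proof.
case/and3P => _ tI _ rP t tP.
have [->|ne] := eqVneq t r; first by left.
by right; move/trivIsetP: tI => /(_ t r tP rP ne).
Qed.

Lemma is_rel_meet (P : {set relT}) r t q :
  is_rel P r -> t \in P -> q \in t -> q \in r -> t \subset r.
Proof.
move=> rr tP qt qr; case: (rr t tP) => // d; by rewrite (disjointFr d qt) in qr.
Qed.

Lemma is_relI (P : {set relT}) r1 r2 : is_rel P r1 -> is_rel P r2 -> is_rel P (r1 :&: r2).
Proof.
move=> h1 h2 t tP; case: (h1 t tP) => s1; last first.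
  right; exact: disjointWr (subsetIl _ _) s1.
case: (h2 t tP) => s2; last by right; exact: disjointWr (subsetIr _ _) s2.
by left; rewrite subsetI s1 s2.
Qed.

Lemma is_relT (P : {set relT}) : is_rel P setT.
Proof. by move=> t _; left; apply: subsetT. Qed.

Lemma is_relC (P : {set relT}) r : is_rel P r -> is_rel P (~: r).
Proof.
move=> h t tP; case: (h t tP) => s1.
  by right; rewrite disjoints_subset setCK.
by left; rewrite -disjoints_subset.
Qed.

Lemma is_rel_transp (P : {set relT}) r : (forall t, t \in P -> transp t \in P) ->
  is_rel P r -> is_rel P (transp r).
Proof.
move=> hP h t tP; case: (h _ (hP t tP)) => s1.
  left; apply/subsetP => -[x y] xy; rewrite inE; apply: (subsetP s1); by rewrite inE.
right; rewrite disjoints_subset; apply/subsetP => -[x y] xy; rewrite !inE.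
apply/negP => yx; have := disjointFr s1 (_ : (y, x) \in transp t); rewrite yx.
by rewrite inE xy => /(_ isT).
Qed.

Definition cntn (r s : relT) a b := (\sum_g ((a, g) \in r) * ((g, b) \in s))%N.

Lemma cntE (r s : relT) a b : #|[set g | ((a, g) \in r) && ((g, b) \in s)]| = cntn r s a b.
Proof.
rewrite -sum1_card /cntn big_mkcond /=; apply: eq_bigr => g _.
by rewrite inE mulnb; case: (_ && _).
Qed.

Lemma ind_decomp (P : {set relT}) r p : partition P setT -> is_rel P r ->
  ((p \in r) : nat) = (\sum_(r' in P | r' \subset r) (p \in r'))%N.
Proof.
move=> hP hr; have cov : p \in cover P by case/and3P: hP => /eqP -> _ _; rewrite inE.
have tI : trivIset P by case/and3P: hP.
have bP := pblock_mem cov; have pb : p \in pblock P p by rewrite mem_pblock.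
rewrite (big_mkcond) /=.
case pr: (p \in r).
  have sub : pblock P p \subset r by apply: (is_rel_meet hr bP pb pr).
  rewrite (bigD1 (pblock P p)) //= bP sub pb big1 // => r' ne.
  case r'P: (r' \in P) => //=; case: (_ \subset _) => //.
  case pr': (p \in r') => //; by rewrite (def_pblock tI r'P pr') eqxx in ne.
rewrite big1 // => r' _; case: (r' \in P) => //; case sr: (r' \subset r) => //.
case pr': (p \in r') => //; by rewrite (subsetP sr _ pr') in pr.
Qed.

Lemma count_const (P : {set relT}) r s t a b a' b' : coherent P ->
  is_rel P r -> is_rel P s -> t \in P -> (a, b) \in t -> (a', b') \in t ->
  cntn r s a b = cntn r s a' b'.
Proof.
case=> hP _ _ hc hr hs tP ab ab'.
have E x y : cntn r s x y = (\sum_(r' in P | r' \subset r) \sum_(s' in P | s' \subset s)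
      cntn r' s' x y)%N.
  rewrite /cntn.
  transitivity (\sum_g \sum_(r' in P | r' \subset r) \sum_(s' in P | s' \subset s)
      (((x, g) \in r') * ((g, y) \in s'))%N).
    apply: eq_bigr => g _; rewrite (ind_decomp (x, g) hP hr) (ind_decomp (g, y) hP hs).
    rewrite big_distrl /=; apply: eq_bigr => r' _; by rewrite big_distrr.
  rewrite exchange_big /=; apply: eq_bigr => r' _.
  by rewrite exchange_big.
rewrite !E; apply: eq_bigr => r' /andP [r'P _]; apply: eq_bigr => s' /andP [s'P _].
rewrite -!cntE; exact: (hc r' s' t r'P s'P tP _ _ _ _ ab ab').
Qed.

Definition Pk (r s : relT) k : relT := [set p : T * T | cntn r s p.1 p.2 == k].

Lemma is_relPk (P : {set relT}) r s k : coherent P -> is_rel P r -> is_rel P s ->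
  is_rel P (Pk r s k).
Proof.
move=> hc hr hs t tP.
case: (boolP [disjoint t & Pk r s k]) => [d|nd]; first by right.
left; have [q] : exists q, q \in t :&: Pk r s k.
  apply/set0Pn; apply: contraNneq nd => e; by rewrite -setI_eq0 e.
rewrite inE => /andP [qt]; rewrite inE => /eqP qk.
apply/subsetP => x xt; rewrite inE -qk.
case: x xt => x1 x2 xt; case: q qt qk => q1 q2 qt qk /=.
by rewrite (count_const hc hr hs tP xt qt).
Qed.

Lemma is_rel_by (P : {set relT}) (r : relT) :
  (forall t q, t \in P -> q \in t -> q \in r -> t \subset r) -> is_rel P r.
Proof.
move=> h t tP; case: (boolP [disjoint t & r]) => [d|nd]; first by right.
left; have [q] : exists q, q \in t :&: r.
  apply/set0Pn; apply: contraNneq nd => e; by rewrite -setI_eq0 e.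
by rewrite inE => /andP [qt qr]; apply: (h t q).
Qed.

End Gen.

Definition pb (P : Prop) : bool := if excluded_middle_informative P then true else false.
Lemma pbP P : reflect P (pb P).
Proof. rewrite /pb; case: excluded_middle_informative => h; by constructor. Qed.

Section Clo.
Variables (T : finType) (S : {set {set T * T}}) (B : {set T}).
Local Notation relT := {set T * T}.

Definition good (S2 : {set relT}) := fission S S2 /\ (forall b, b \in B -> fiber S2 [set b]).

Definition Fs : {set relT} := [set r | pb (forall S2, good S2 -> is_rel S2 r)].

Lemma inFP r : reflect (forall S2, good S2 -> is_rel S2 r) (r \in Fs).
Proof. rewrite inE; exact: pbP. Qed.

Definition atm p : relT := \bigcap_(r in Fs | p \in r) r.

Lemma atm_F p : atm p \in Fs.
Proof.
apply/inFP => S2 g; rewrite /atm; apply: (big_ind (fun r => is_rel S2 r)).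
- exact: is_relT.
- exact: is_relI.
by move=> r /andP [/inFP h _]; apply: h.
Qed.

Lemma mem_atm p : p \in atm p.
Proof. by apply/bigcapP => r /andP [_ ->]. Qed.

Lemma atm_sub p r : r \in Fs -> p \in r -> atm p \subset r.
Proof. by move=> rF pr; apply: bigcap_inf; rewrite rF pr. Qed.

Lemma FC r : r \in Fs -> ~: r \in Fs.
Proof. move/inFP => h; apply/inFP => S2 g; apply: is_relC; exact: h. Qed.

Lemma atm_disj p r : r \in Fs -> p \notin r -> [disjoint atm p & r].
Proof.
move=> rF pr; rewrite disjoints_subset; apply: atm_sub; first exact: FC.
by rewrite inE.
Qed.

Lemma atm_eq p q : q \in atm p -> atm q = atm p.
Proof.
move=> qp; have s1 : atm q \subset atm p by apply: atm_sub => //; exact: atm_F.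
case pq: (p \in atm q).
  by apply/eqP; rewrite eqEsubset s1 /=; apply: atm_sub => //; exact: atm_F.
have := disjointFr (atm_disj (atm_F q) (negbT pq)) qp.
by rewrite mem_atm.
Qed.

Definition clo : {set relT} := [set atm p | p in [set: T * T]].

Lemma is_rel_clo r : r \in Fs -> is_rel clo r.
Proof.
move=> rF; apply: is_rel_by => t q /imsetP [p _ ->] qt qr.
rewrite -(atm_eq qt); exact: atm_sub.
Qed.

Lemma FT r : r \in Fs -> transp r \in Fs.
Proof.
move/inFP => h; apply/inFP => S2 g; have [[[_ _ hT _] _] _] := g.
apply: is_rel_transp => //; exact: h.
Qed.

Lemma FPk r s k : r \in Fs -> s \in Fs -> Pk r s k \in Fs.
Proof.
move=> /inFP hr /inFP hs; apply/inFP => S2 g.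
have hc : coherent S2 by case: g => [[]].
apply: is_relPk => //; [exact: hr | exact: hs].
Qed.

Lemma Fdiag : diag setT \in Fs.
Proof. by apply/inFP => S2 [[[_ hd _ _] _] _]. Qed.

Lemma FS r : is_rel S r -> r \in Fs.
Proof. by move=> h; apply/inFP => S2 [[_ hf] _]; apply: hf. Qed.

Lemma Fb b : b \in B -> diag [set b] \in Fs.
Proof.
move=> bB; apply/inFP => S2 [[[hp _ _ _] _] hf]; apply: is_rel_part => //.
exact: hf.
Qed.

Lemma diag1 (b : T) : diag [set b] = [set (b, b)].
Proof.
apply/setP => -[x y]; rewrite !inE /=; apply/andP/eqP.
  by case=> /eqP -> /eqP <-.
by case=> -> ->; rewrite !eqxx.
Qed.

Lemma atm_b b : b \in B -> atm (b, b) = diag [set b].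
Proof.
move=> bB; apply/eqP; rewrite eqEsubset atm_sub ?Fb //=; last by rewrite diag1 inE.
by rewrite diag1 sub1set mem_atm.
Qed.

Lemma clo_coherent : coherent clo.
Proof.
split.
- apply/and3P; split.
  + rewrite eqEsubset subsetT /=; apply/subsetP => p _.
    apply/bigcupP; exists (atm p); [exact: imset_f | exact: mem_atm].
  + apply/trivIsetP => A1 A2 /imsetP [p _ ->] /imsetP [q _ ->] ne.
    rewrite -setI_eq0; apply/eqP/setP => x; rewrite !inE.
    apply/negP => /andP [xp xq]; by rewrite -(atm_eq xp) -(atm_eq xq) eqxx in ne.
  + apply/imsetP => -[p _] e; by have := mem_atm p; rewrite -e inE.
- exact: is_rel_clo Fdiag.
- move=> t /imsetP [p _ ->]; apply/imsetP; exists (p.2, p.1) => //.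
  have sub q : atm (q.2, q.1) \subset transp (atm q).
    apply: atm_sub; first by apply: FT; exact: atm_F.
    by rewrite inE; case: q => ? ? /=; exact: mem_atm.
  apply/eqP; rewrite eqEsubset; apply/andP; split; last first.
    have := sub p; done.
  apply/subsetP => -[x y]; rewrite inE /= => yx.
  have e : p = ((p.2, p.1).2, (p.2, p.1).1) by case: p {yx sub}.
  rewrite e in yx; have := subsetP (sub (p.2, p.1)) _ yx; by rewrite inE.
- move=> r s t /imsetP [p1 _ ->] /imsetP [p2 _ ->] /imsetP [p _ ->] a b a' b' ab ab'.
  rewrite !cntE.
  have PF := FPk (cntn (atm p1) (atm p2) a b) (atm_F p1) (atm_F p2).
  have : atm p \subset Pk (atm p1) (atm p2) (cntn (atm p1) (atm p2) a b).
    rewrite -(atm_eq ab); apply: atm_sub => //; by rewrite inE.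
  by move/subsetP => /(_ _ ab'); rewrite inE => /eqP.
Qed.

Lemma clo_smallest : smallest_fission_fixing S B clo.
Proof.
split.
- split; first exact: clo_coherent.
  by move=> r h; apply: is_rel_clo; apply: FS.
- move=> b bB; rewrite /fiber -atm_b //; exact: imset_f.
- move=> S2 f2 fx2; split; first by case: f2.
  have g : good S2 by [].
  move=> r hr; apply: is_rel_by => t q tS qt qr.
  have aq : atm q \in clo by exact: imset_f.
  have s1 : atm q \subset r by apply: (is_rel_meet hr aq (mem_atm q) qr).
  have s2 : t \subset atm q.
    by apply: (is_rel_meet _ tS qt (mem_atm q)); move/inFP: (atm_F q); apply.
  exact: subset_trans s2 s1.
Qed.

End Clo.

Section Main.
Variable T : finType.
Local Notation relT := {set T * T}.

Lemma cnt_pos (P : {set relT}) r s t a b a' b' : coherent P -> r \in P -> s \in P -> t \in P ->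
  (a, b) \in t -> (a', b') \in t -> forall g, (a, g) \in r -> (g, b) \in s ->
  exists g', ((a', g') \in r) && ((g', b') \in s).
Proof.
case=> _ _ _ hc rP sP tP ab ab' g ag gb.
have : 0 < #|[set g | ((a, g) \in r) && ((g, b) \in s)]|.
  by rewrite card_gt0; apply/set0Pn; exists g; rewrite inE ag gb.
rewrite (hc r s t rP sP tP _ _ _ _ ab ab') card_gt0 => /set0Pn [g' ]; rewrite inE.
by exists g'.
Qed.

Lemma L_fix (P : {set relT}) t x y x' y' : coherent P -> diag [set x] \in P -> t \in P ->
  (x, y) \in t -> (x', y') \in t -> x' = x.
Proof.
move=> hc dP tP xy xy'.
have dx : (x, x) \in diag [set x] by rewrite inE /= inE !eqxx.
have [g /andP [h _]] := cnt_pos hc dP tP tP xy xy' dx xy.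
by move: h; rewrite !inE /= => /andP [/eqP -> _].
Qed.

Lemma L_fixr (P : {set relT}) t x y x' y' : coherent P -> diag [set y] \in P -> t \in P ->
  (x, y) \in t -> (x', y') \in t -> y' = y.
Proof.
move=> hc dP tP xy xy'; have hT : transp t \in P by case: hc => _ _ h _; exact: (h _ tP).
have h1 : (y, x) \in transp t by rewrite inE.
have h2 : (y', x') \in transp t by rewrite inE.
exact: (L_fix hc dP hT h1 h2).
Qed.

Lemma L1 (P : {set relT}) t u x y y1 y2 : coherent P -> t \in P -> u \in P ->
  (x, y) \in t -> (y, y) \in u -> (y1, y2) \in u ->
  exists g, ((g, y1) \in t) && ((g, y2) \in t).
Proof.
move=> hc tP uP xy yy y12; have hT : transp t \in P by case: hc => _ _ h _; exact: (h _ tP).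
have yx : (y, x) \in transp t by rewrite inE.
have [g /andP [h1 h2]] := cnt_pos hc hT tP uP yy y12 yx xy.
by exists g; move: h1; rewrite inE /= => ->.
Qed.

Lemma part_pblock (P : {set relT}) p : coherent P -> pblock P p \in P /\ p \in pblock P p.
Proof.
case=> /and3P [/eqP cv _ _] _ _ _.
have c : p \in cover P by rewrite cv inE.
by split; [exact: pblock_mem | rewrite mem_pblock].
Qed.

Lemma all_fixed_single (P : {set relT}) t : coherent P -> (forall x, diag [set x] \in P) ->
  t \in P -> exists p, t = [set p].
Proof.
move=> hc hd tP.
have : t != set0 by case: hc => /and3P [_ _ n0] _ _ _; apply: contraNneq n0 => <-.
case/set0Pn => -[x y] xy; exists (x, y); apply/eqP; rewrite eqEsubset sub1set xy andbT.
apply/subsetP => -[x' y'] h; apply/set1P.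
by rewrite (L_fix hc (hd x) tP xy h) (L_fixr hc (hd y) tP xy h).
Qed.

Definition Dc : {set relT} := [set [set p] | p in [set: T * T]].

Lemma is_rel_Dc r : is_rel Dc r.
Proof.
apply: is_rel_by => t q /imsetP [p _ ->] /set1P -> qr; by rewrite sub1set.
Qed.

Lemma Dc_coherent : coherent Dc.
Proof.
split.
- apply/and3P; split.
  + rewrite eqEsubset subsetT /=; apply/subsetP => p _.
    apply/bigcupP; exists [set p]; [exact: imset_f | exact: set11].
  + apply/trivIsetP => A1 A2 /imsetP [p _ ->] /imsetP [q _ ->] ne.
    rewrite -setI_eq0; apply/eqP/setP => x; rewrite !inE.
    apply/negP => /andP [/eqP xp /eqP xq]; by rewrite -xp -xq eqxx in ne.
  + apply/imsetP => -[p _] e; by have := set11 p; rewrite -e inE.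
- exact: is_rel_Dc.
- move=> t /imsetP [p _ ->]; apply/imsetP; exists (p.2, p.1) => //.
  apply/setP => -[x y]; rewrite !inE; case: p => ? ? /=.
  by rewrite !xpair_eqE andbC.
- move=> r s t _ _ /imsetP [p _ ->] a b a' b' /set1P e1 /set1P e2.
  by rewrite -e1 in e2; case: e2 => -> ->.
Qed.

Lemma base_of (S : {set relT}) (B : {set T}) :
  (forall S2, fission S S2 -> (forall b, b \in B -> fiber S2 [set b]) ->
     forall x, diag [set x] \in S2) -> is_base S B.
Proof.
move=> h; exists Dc; split; last first.
  by move=> t /imsetP [p _ ->]; rewrite cards1.
split.
- split; [exact: Dc_coherent | by move=> r _; apply: is_rel_Dc].
- by move=> b _; rewrite /fiber diag1; apply: imset_f.
- move=> S2 f2 fx2; have hc : coherent S2 by case: f2.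
  split => // r _ t tP; have [p ->] := all_fixed_single hc (h S2 f2 fx2) tP.
  case pr: (p \in r); first by left; rewrite sub1set.
  right; rewrite disjoints_subset sub1set inE pr //.
Qed.

End Main.

Section Propag.
Variable T : finType.
Local Notation relT := {set T * T}.

Lemma propagate (S : {set relT}) (s : relT) (S2 : {set relT}) al be ga :
  (forall (a : T) (Sa : {set relT}),
      smallest_fission_fixing S [set a] Sa ->
      semiregular (nbr s a) (restr Sa (nbr s a))) ->
  fission S S2 -> is_rel S s -> diag [set al] \in S2 -> diag [set be] \in S2 ->
  (al, be) \in s -> (al, ga) \in s -> diag [set ga] \in S2.
Proof.
move=> H f2 hs da db ab ag.
have sm := clo_smallest S [set al].
have sr := H al _ sm.
have hc2 : coherent S2 by case: f2.
have fa : fission (clo S [set al]) S2.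
  case: sm => _ _ /(_ S2 f2); apply => b /set1P ->; exact: da.
have hs2 : is_rel S2 s by case: f2 => _; apply.
have hca : coherent (clo S [set al]) by case: sm => [[]].
set G := nbr s al.
have [uP uin] := part_pblock (ga, ga) hc2.
have [tP tin] := part_pblock (be, ga) hc2.
have [vP vin] := part_pblock (al, ga) hc2.
have [rP rin] := part_pblock (be, ga) hca.
set u := pblock S2 (ga, ga) in uP uin.
set t := pblock S2 (be, ga) in tP tin.
set v := pblock S2 (al, ga) in vP vin.
set r := pblock (clo S [set al]) (be, ga) in rP rin.
have tr : t \subset r.
  have hr : is_rel S2 r.
    case: fa => _; apply; apply: is_rel_part => //; by case: hca.
  exact: (is_rel_meet hr tP tin rin).
have vs : v \subset s by exact: (is_rel_meet hs2 vP vin ag).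
have key y1 y2 : (y1, y2) \in u -> y1 = ga /\ y2 = ga.
  move=> yu.
  have [g /andP [g1 g2]] := L1 hc2 tP uP tin uin yu.
  have eg : g = be by exact: (L_fix hc2 db tP tin g1).
  rewrite eg in g1 g2.
  have [g' /andP [g1' g2']] := L1 hc2 vP uP vin uin yu.
  have eg' : g' = al by exact: (L_fix hc2 da vP vin g1').
  rewrite eg' in g1' g2'.
  have rr : r :&: setX G G \in restr (clo S [set al]) G.
    rewrite /restr in_setD1; apply/andP; split.
      apply/eqP => e; have : (be, ga) \in r :&: setX G G.
        by rewrite /G /nbr !inE rin ab ag.
      by rewrite e inE.
    exact: imset_f.
  have beG : be \in G by rewrite /G inE.
  have := sr be _ beG rr => /card_le1_eqP hle.
  have mem z : (al, z) \in v -> (be, z) \in t -> z \in nbr (r :&: setX G G) be.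
    move=> hv ht; rewrite /G /nbr !inE (subsetP tr _ ht) ab /=.
    exact: (subsetP vs _ hv).
  have m0 : ga \in nbr (r :&: setX G G) be by apply: mem.
  have e1 := hle _ _ m0 (mem _ g1' g1); have e2 := hle _ _ m0 (mem _ g2' g2).
  by split.
suff -> : diag [set ga] = u by [].
apply/eqP; rewrite eqEsubset; apply/andP; split.
  by rewrite diag1 sub1set.
apply/subsetP => -[y1 y2] yu; have [-> ->] := key _ _ yu; by rewrite diag1 inE.
Qed.

End Propag.
Unset Implicit Arguments.

Theorem theorem3p3 (T : finType) (S : {set {set T * T}}) (s : {set T * T}) :
  coherent S ->
  is_rel S s ->
  connected_rel s ->
  (forall (a : T) (Sa : {set {set T * T}}),
      smallest_fission_fixing S [set a] Sa ->
      semiregular (nbr s a) (restr Sa (nbr s a))) ->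
  (forall a b : T, (a, b) \in s -> a != b -> is_base S [set a; b])
  /\ (exists B : {set T}, is_base S B /\ #|B| <= 2).
Proof.
move=> hS hs [sym conn] H.
have symm x y : (x, y) \in s -> (y, x) \in s.
  by move=> h; rewrite sym inE.
have part1 : forall a b : T, (a, b) \in s -> a != b -> is_base S [set a; b].
  move=> a b ab _; apply: base_of => S2 f2 fx x.
  pose fxp y := diag [set y] \in S2.
  pose P := [pred y | fxp y && [exists z, fxp z && ((y, z) \in s)]].
  have step y z : (y, z) \in s -> y \in P -> z \in P.
    move=> yz /andP [fy /existsP [w /andP [fw yw]]].
    have fz : fxp z by apply: (propagate H f2 hs fy fw yw yz).
    apply/andP; split => //; apply/existsP; exists y; by rewrite fy symm.
  have cl : closed (fun u v => (u, v) \in s) P.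
    move=> y z yz; apply/idP/idP; [exact: step | apply: step; exact: symm].
  have Pa : a \in P.
    apply/andP; split; first by apply: fx; rewrite !inE eqxx.
    apply/existsP; exists b; rewrite ab andbT; apply: fx; by rewrite !inE eqxx orbT.
  have : x \in P.
    have [<- //|ne] := eqVneq a x.
    by rewrite -(closed_connect cl (conn a x ne)).
  by move=> /andP [h _]; exact: h.
split => //.
case: (boolP [exists p : T * T, (p \in s) && (p.1 != p.2)]).
  case/existsP => -[a b] /andP [ab ne]; exists [set a; b]; split.
    exact: part1.
  by rewrite cards2; case: (a != b).
move=> nex; exists setT; split.
  by apply: base_of => S2 f2 fx x; apply: fx; rewrite inE.
rewrite cardsT; apply: leq_trans (_ : 1 <= 2) => //.
apply/fintype_le1P => x y; apply/eqP; apply/negP => /negP ne.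
have cl : closed (fun u v => (u, v) \in s) (pred1 x).
  move=> u v uv; have : u = v.
    apply/eqP; apply: contraNT nex => unv; apply/existsP; exists (u, v); by rewrite uv.
  by move=> ->.
rewrite eq_sym in ne; have := closed_connect cl (conn x y ne).
by rewrite !inE eqxx eq_sym (negbTE ne).
Qed.
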